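(* For every finite graph $G$, the branch-depth of its graphic matroid $M(G)$ is at most the tree-depth $\mathrm{td}(G)$.
   Context: The graphic matroid $M(G)$ has ground set $E(G)$, with a set of edges independent iff it is acyclic. For a rooted tree $T$, $\|T\|$ is its number of edges and its depth is the number of edges of a longest root-to-leaf path. A depth-decomposition of a finite matroid $M$ (rank function $r$) is a pair $(T,f)$ with $T$ a rooted tree and $f:M\to V(T)$ such that (1) $r(M)=\|T\|$ and (2) $r(X)\le\|T^*(X)\|$ for every $X\subseteq M$, where $T^*(X)$ is the union of the paths from the root to all vertices of $f(X)$. The branch-depth $\mathrm{bd}(M)$ is the minimum depth of $T$ over all depth-decompositions $(T,f)$ of $M$. For a rooted tree $T$, $\mathrm{cl}(T)$ is the graph on $V(T)$ with an edge between $u$ and $v$ whenever one is an ancestor of the other. The tree-depth $\mathrm{td}(G)$ is the smallest depth of a rooted tree $T$ with $V(T)=V(G)$ and $G\subseteq\mathrm{cl}(T)$. *)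

(* Defs.v *)
From mathcomp Require Import all_boot.
From Stdlib Require Import ClassicalDescription.
Set Implicit Arguments. Unset Strict Implicit. Unset Printing Implicit Defensive.

Definition pbool (P : Prop) : bool :=
  if excluded_middle_informative P then true else false.

(* ---------- Finite (multi)graphs ----------
   A finite graph is given by a finite vertex type V, a finite edge type E
   and the endpoint map ends : E -> V * V (loops and parallel edges allowed;
   the order of the two endpoints is irrelevant). *)
Definition joins (V E : finType) (ends : E -> V * V) (e : E) (x y : V) : Prop :=
  ends e = (x, y) \/ ends e = (y, x).

Definition has_cycle_in (V E : finType) (ends : E -> V * V) (F : {set E}) : Prop :=
  exists (k : nat) (vs : 'I_k.+1 -> V) (es : 'I_k.+1 -> E),
    injective vs /\ injective es /\
    (forall i, es i \in F) /\
    (forall i, joins ends (es i) (vs i) (vs (ordS i))).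

Definition acyclic (V E : finType) (ends : E -> V * V) (F : {set E}) : Prop :=
  ~ has_cycle_in ends F.

Definition graphic_rank (V E : finType) (ends : E -> V * V) (X : {set E}) : nat :=
  \max_(F : {set E} | (F \subset X) && pbool (acyclic ends F)) #|F|.

(* Its edges are the pairs {w, par w} for w <> root, so ||T|| = #|W| - 1.
   u is an ancestor of v (u = v allowed) iff fconnect par v u. *)
Definition rooted_tree (W : finType) (root : W) (par : W -> W) : Prop :=
  par root = root /\ forall w, fconnect par w root.

Definition tree_depth_le (W : finType) (root : W) (par : W -> W) (d : nat) : Prop :=
  forall w, iter d par w = root.

(* ||T^*(X)||: number of edges of the union of the root paths to f(X),
   i.e. number of non-root vertices that are ancestors of some f x, x in X. *)
Definition tstar_size (E W : finType) (root : W) (par : W -> W) (f : E -> W)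
    (X : {set E}) : nat :=
  #|[set w : W | (w != root) && [exists x in X, fconnect par (f x) w]]|.

Definition depth_decomposition (E : finType) (r : {set E} -> nat)
    (W : finType) (root : W) (par : W -> W) (f : E -> W) : Prop :=
  rooted_tree root par /\
  r setT = #|W|.-1 /\
  forall X : {set E}, r X <= tstar_size root par f X.

Definition branch_depth_le (E : finType) (r : {set E} -> nat) (k : nat) : Prop :=
  exists (W : finType) (root : W) (par : W -> W) (f : E -> W),
    depth_decomposition r root par f /\ tree_depth_le root par k.

(* Every edge of G must be an edge of cl(T),
   i.e. join two distinct vertices one of which is an ancestor of the other. *)
Definition closure_contains (V E : finType) (ends : E -> V * V)
    (par : V -> V) : Prop :=
  forall e, (ends e).1 != (ends e).2 /\
    (fconnect par (ends e).1 (ends e).2 || fconnect par (ends e).2 (ends e).1).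

Definition tree_depth_graph_le (V E : finType) (ends : E -> V * V) (k : nat) : Prop :=
  exists (root : V) (par : V -> V),
    rooted_tree root par /\ closure_contains ends par /\ tree_depth_le root par k.

(* Main.v *)
Require Import Defs.
From mathcomp Require Import all_boot.
From Stdlib Require Import ClassicalDescription.
From mathcomp Require Import zify.
Set Implicit Arguments. Unset Strict Implicit. Unset Printing Implicit Defensive.


Lemma pboolP (P : Prop) : pbool P = true <-> P.
Proof. rewrite /pbool; case: excluded_middle_informative => //; split=> //. Qed.

Lemma conn_ind (T : finType) (e : rel T) (P : T -> Prop) x :
  P x -> (forall y z, P y -> e y z -> P z) -> forall y, connect e x y -> P y.
Proof.
move=> Px st y /connectP [p pth ->]; elim: p x Px pth => [|z p IH] x Px //=.
case/andP=> exz pth; apply: IH pth; exact: st exz.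
Qed.

Section Graph.
Variables (V E : finType) (ends : E -> V * V).
Implicit Types F : {set E}.

Definition jb (e : E) (x y : V) : bool := (ends e == (x, y)) || (ends e == (y, x)).
Lemma jbP e x y : reflect (joins ends e x y) (jb e x y).
Proof. rewrite /jb /joins; apply: (iffP orP) => -[] /eqP ?; by [left|right]. Qed.
Lemma jb_sym e x y : jb e x y = jb e y x. Proof. by rewrite /jb orbC. Qed.

Definition adj (F : {set E}) : rel V := fun x y => [exists e in F, jb e x y].
Lemma adj_sym F : symmetric (adj F).
Proof. by move=> x y; apply: eq_existsb => e; rewrite jb_sym. Qed.
Lemma adj_csym F : connect_sym (adj F). Proof. exact: sym_connect_sym (adj_sym F). Qed.
Lemma adj_mono (F F' : {set E}) : F \subset F' -> forall x y, connect (adj F) x y -> connect (adj F') x y.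
Proof.
move=> sF; apply: connect_sub => x y /existsP [e /andP [eF j]]; apply: connect1.
by apply/existsP; exists e; rewrite (subsetP sF).
Qed.

Lemma adj_jb F e x y : e \in F -> jb e x y -> adj F x y.
Proof. by move=> eF j; apply/existsP; exists e; rewrite eF. Qed.

Lemma jb_ends e x y : jb e x y -> (x == (ends e).1) && (y == (ends e).2) || (x == (ends e).2) && (y == (ends e).1).
Proof. by rewrite /jb; case: (ends e) => a b; rewrite !xpair_eqE => /orP [] /andP [/eqP -> /eqP ->]; rewrite !eqxx ?orbT. Qed.

Lemma conn_split F e x y : e \in F -> connect (adj F) x y ->
  let C := connect (adj (F :\ e)) in
  C x y \/ (C x (ends e).1 /\ C (ends e).2 y) \/ (C x (ends e).2 /\ C (ends e).1 y).
Proof.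
move=> eF Cxy C.
have Cs := adj_csym (F :\ e).
have Ct : forall u v w, C u v -> C v w -> C u w by move=> u v w; exact: connect_trans.
apply: (conn_ind (P := fun y => C x y \/ (C x (ends e).1 /\ C (ends e).2 y) \/ (C x (ends e).2 /\ C (ends e).1 y))) Cxy.
  by left; exact: connect0.
move=> u v Pu /existsP [e0 /andP [e0F j]].
case: (eqVneq e0 e) => [E0|ne].
  subst e0; case/orP: (jb_ends j) => /andP [/eqP eu /eqP ev]; subst u v.
    case: Pu => [h|[[h1 h2]|[h1 h2]]].
    - by right; left; split=> //; exact: connect0.
    - by right; left; split=> //; exact: connect0.
    - by left.
  case: Pu => [h|[[h1 h2]|[h1 h2]]].
  - by right; right; split=> //; exact: connect0.
  - by left.
  - by right; right; split=> //; exact: connect0.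
have a' : adj (F :\ e) u v by apply: adj_jb j; rewrite !inE ne.
have Cuv : C u v by exact: connect1.
case: Pu => [h|[[h1 h2]|[h1 h2]]].
- by left; exact: Ct h Cuv.
- by right; left; split=> //; exact: Ct h2 Cuv.
- by right; right; split=> //; exact: Ct h2 Cuv.
Qed.

Lemma acyclic_sub (F F' : {set E}) : F \subset F' -> acyclic ends F' -> acyclic ends F.
Proof.
move=> sF ac [k [vs [es [h1 [h2 [h3 h4]]]]]]; apply: ac.
exists k, vs, es; do 3!split=> //; move=> i; exact: (subsetP sF).
Qed.

Lemma adj0 x y : connect (adj set0) x y -> y = x.
Proof.
move/connectP=> [[|z p] /= ]; first by move=> _ ->.
by case/andP=> /existsP [e]; rewrite inE.
Qed.

Lemma val_ordS k (i : 'I_k.+1) : nat_of_ord (ordS i) = i.+1 %% k.+1.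
Proof. by []. Qed.

Lemma val_iter_ordS k m (i : 'I_k.+1) : nat_of_ord (iter m (@ordS _) i) = (i + m) %% k.+1.
Proof.
elim: m => [|m IH]; first by rewrite addn0 modn_small.
by rewrite iterS val_ordS IH -addn1 modnDml -addnA addn1.
Qed.

Definition edge_of (F : {set E}) (e : E) x y := odflt e [pick e0 in F | jb e0 x y].
Lemma edge_ofP F e x y : adj F x y -> edge_of F e x y \in F /\ jb (edge_of F e x y) x y.
Proof.
rewrite /edge_of => /existsP [e1 h]; case: pickP => [e0 /andP [] //|/(_ e1)].
by rewrite h.
Qed.

Lemma no_path F e : acyclic ends F -> e \in F ->
  ~~ connect (adj (F :\ e)) (ends e).1 (ends e).2.
Proof.
move=> ac eF; apply/negP => Hc; apply: ac.
move: Hc; case Ee: (ends e) => [a b] /= Hc.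
have jab : joins ends e b a by right.
case/connectP: Hc => p0 pth0; case/shortenP: pth0 => p pth uq _ lst.
pose s := a :: p.
exists (size p), (fun i : 'I_(size p).+1 => nth a s i),
  (fun i : 'I_(size p).+1 => if i < size p then edge_of (F :\ e) e (nth a s i) (nth a p i) else e).
have adjs : forall i, i < size p -> adj (F :\ e) (nth a s i) (nth a p i) by apply/pathP.
have nthn : nth a s (size p) = b by rewrite lst (last_nth a).
split; first by move=> i j /= /eqP; rewrite nth_uniq //= ?ltn_ord // => /eqP /val_inj.
split.
  move=> i j /=; case: ifP => hi; case: ifP => hj.
  - move=> eij; apply: val_inj.
    have [h1 /jb_ends j1] := edge_ofP e (adjs _ hi).
    have [_ /jb_ends j2] := edge_ofP e (adjs _ hj).
    rewrite eij in j1.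
    have hi' : i < size s by rewrite /= ltnS ltnW.
    have hj' : j < size s by rewrite /= ltnS ltnW.
    have hi1 : i.+1 < size s by rewrite /= ltnS.
    have hj1 : j.+1 < size s by rewrite /= ltnS.
    have nq : forall u v, u < size s -> v < size s -> (nth a s u == nth a s v) = (u == v).
      by move=> u v hu hv; rewrite nth_uniq.
    change (nth a p i) with (nth a s i.+1) in j1.
    change (nth a p j) with (nth a s j.+1) in j2.
    set c := edge_of _ _ _ _ in j1 j2.
    case/orP: j1 => /andP [/eqP x1 /eqP x2]; case/orP: j2 => /andP [/eqP y1 /eqP y2].
    + by apply/eqP; rewrite -(nq i j hi' hj') x1 y1.
    + have := nq i j.+1 hi' hj1; rewrite x1 y2 eqxx => /esym /eqP ij.
      have := nq i.+1 j hi1 hj'; rewrite x2 y1 eqxx => /esym /eqP ji.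
      by move: ji; rewrite ij => /eqP; rewrite -addn2 -{2}(addn0 j) eqn_add2l.
    + have := nq i j.+1 hi' hj1; rewrite x1 y2 eqxx => /esym /eqP ij.
      have := nq i.+1 j hi1 hj'; rewrite x2 y1 eqxx => /esym /eqP ji.
      by move: ji; rewrite ij => /eqP; rewrite -addn2 -{2}(addn0 j) eqn_add2l.
    + by apply/eqP; rewrite -(nq i j hi' hj') x1 y1.
  - have [h1 _] := edge_ofP e (adjs _ hi); move=> E1; by move: h1; rewrite E1 !inE eqxx.
  - have [h1 _] := edge_ofP e (adjs _ hj); move=> E1; by move: h1; rewrite -E1 !inE eqxx.
  - move=> _; apply: val_inj.
    have ei : val i = size p by apply/eqP; rewrite eqn_leq -ltnS ltn_ord leqNgt hi.
    have ej : val j = size p by apply/eqP; rewrite eqn_leq -ltnS ltn_ord leqNgt hj.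
    by rewrite ei ej.
split.
  move=> i /=; case: ifP => // hi; have [h1 _] := edge_ofP e (adjs _ hi).
  by case/setD1P: h1.
move=> i /=; case: ifP => hi.
  have [_ /jbP h] := edge_ofP e (adjs _ hi); rewrite modn_small ?ltnS //.
have -> : nat_of_ord i = size p by apply/eqP; rewrite eqn_leq -ltnS ltn_ord leqNgt hi.
by rewrite modnn nthn.
Qed.
End Graph.


Section G2.
Variables (V E : finType) (ends : E -> V * V).
Implicit Types F : {set E}.

Lemma add_edge_acyclic F e : acyclic ends F ->
  ~~ connect (adj ends F) (ends e).1 (ends e).2 -> acyclic ends (e |: F).
Proof.
move=> ac nc [k [vs [es [ivs [ies [inF jn]]]]]].
case: (boolP [exists i, es i == e]) => [/existsP [i0 /eqP ei0] | /existsPn ne]; last first.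
  apply: ac; exists k, vs, es; do 3!split=> //.
  by move=> i; have := inF i; rewrite !inE (negbTE (ne i)).
have inF' : forall j, j != i0 -> adj ends F (vs j) (vs (ordS j)).
  move=> j nj; apply: (adj_jb (e := es j)); last by apply/jbP.
  have := inF j; rewrite !inE; case: eqP => //= ej.
  by move: nj; rewrite -(ies j i0) ?eqxx // ej ei0.
have step : forall m, m <= k -> connect (adj ends F) (vs (ordS i0)) (vs (iter m (@ordS _) (ordS i0))).
  elim=> [|m IH] hm; first exact: connect0.
  apply: connect_trans (IH (ltnW hm)) _; rewrite iterS; apply: connect1; apply: inF'.
  apply/eqP => /(congr1 (@nat_of_ord _)); rewrite val_iter_ordS val_ordS modnDml.
  have hi := ltn_ord i0.
  case: (ltnP (i0.+1 + m) k.+1) => h.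
    by rewrite modn_small //; lia.
  have -> : i0.+1 + m = (i0 + m - k) + k.+1 by lia.
  by rewrite modnDr modn_small; lia.
have := step k (leqnn k).
have -> : iter k (@ordS _) (ordS i0) = i0.
  apply: ord_inj; rewrite val_iter_ordS val_ordS modnDml.
  by rewrite addSn -addnS modnDr modn_small.
have := jn i0; rewrite ei0 => /jbP /jb_ends.
move: nc; case: (ends e) => a b /= nc.
have Cs := adj_csym ends F.
case/orP=> /andP [/eqP -> /eqP ->] h; move: nc; rewrite ?h //.
by rewrite Cs h.
Qed.

Lemma cover_bound F (R : {set V}) :
  (forall x, exists2 r, r \in R & connect (adj ends F) x r) -> #|V| <= #|F| + #|R|.
Proof.
move: {2}#|F| (erefl #|F|) => n; elim: n F R => [|n IH] F R hF cov.
  have F0 : F = set0 by apply/eqP; rewrite -cards_eq0 hF.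
  subst F; rewrite cards0 add0n -cardsT; apply: subset_leq_card; apply/subsetP => x _.
  by have [r rR /(@adj0 _ _ ends) Er] := cov x; rewrite -Er.
have [e eF] : exists e, e \in F by apply/card_gt0P; rewrite hF.
have hF' : #|F :\ e| = n by move: hF; rewrite (cardsD1 e) eF add1n => -[].
have Cs := adj_csym ends (F :\ e).
have [r rR Car] := cov (ends e).1.
pose c := if connect (adj ends (F :\ e)) (ends e).1 r then (ends e).2 else (ends e).1.
have cov' : forall x, exists2 r, r \in c |: R & connect (adj ends (F :\ e)) x r.
  move=> x; have [rx rxR Cx] := cov x.
  case: (conn_split eF Cx) => [h|[[h1 h2]|[h1 h2]]].
  - by exists rx => //; rewrite !inE rxR orbT.
  - rewrite /c; case: ifP => hc.
      by exists r; [rewrite !inE rR orbT | exact: connect_trans h1 hc].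
    by exists (ends e).1 => //; rewrite !inE eqxx.
  - rewrite /c; case: ifP => hc.
      by exists (ends e).2 => //; rewrite !inE eqxx.
    case: (conn_split eF Car) => [h|[[g1 g2]|[g1 g2]]]; first by rewrite h in hc.
      by exists r; [rewrite !inE rR orbT | exact: connect_trans h1 g2].
    by rewrite g2 in hc.
have := IH _ _ hF' cov'; rewrite cardsU1 => h; apply: (leq_trans h).
rewrite addnA leq_add2r; case: (c \notin R) => /=; lia.
Qed.

Definition pw_disc F (R : {set V}) :=
  forall r1 r2, r1 \in R -> r2 \in R -> r1 != r2 -> ~~ connect (adj ends F) r1 r2.

Lemma acyc_bound F (R : {set V}) : acyclic ends F -> pw_disc F R -> #|F| + #|R| <= #|V|.
Proof.
move: {2}#|F| (erefl #|F|) => n; elim: n F R => [|n IH] F R hF ac pw.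
  by rewrite hF add0n max_card.
have [e eF] : exists e, e \in F by apply/card_gt0P; rewrite hF.
have hF' : #|F :\ e| = n by move: hF; rewrite (cardsD1 e) eF add1n => -[].
have Cs := adj_csym ends (F :\ e).
have ac' : acyclic ends (F :\ e) by apply: acyclic_sub ac; apply: subD1set.
have np := no_path ac eF.
have mono : forall x y, connect (adj ends (F :\ e)) x y -> connect (adj ends F) x y.
  by apply: adj_mono; apply: subD1set.
pose c := if [exists r in R, connect (adj ends (F :\ e)) r (ends e).1] then (ends e).2 else (ends e).1.
have hc : forall r, r \in R -> ~~ connect (adj ends (F :\ e)) r c.
  move=> r2 r2R; rewrite /c; case: ifP => [/existsP [r1 /andP [r1R C1]]|/negbT/existsPn nx]; last first.
    by move: (nx r2); rewrite r2R.
  apply/negP => C2.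
  case: (eqVneq r1 r2) => [E12|n12].
    subst r2; move: np; rewrite Cs in C1; by rewrite (connect_trans C1 C2).
  have := pw _ _ r1R r2R n12; apply/negP/negPn.
  apply: connect_trans (mono _ _ C1) _.
  apply: connect_trans (connect1 (adj_jb eF (_ : jb ends e (ends e).1 (ends e).2))) _.
    by rewrite /jb; case: (ends e) => a b; rewrite eqxx.
  by apply: mono; rewrite adj_csym.
have cR : c \notin R by apply/negP => cR; move: (hc _ cR); rewrite connect0.
have pw' : pw_disc (F :\ e) (c |: R).
  move=> r1 r2; rewrite !inE => /orP [/eqP ->|r1R] /orP [/eqP ->|r2R] ne.
  - by rewrite eqxx in ne.
  - by rewrite Cs hc.
  - exact: hc.
  - by apply/negP => /mono; apply/negP; apply: pw.
have := IH _ _ hF' ac' pw'; rewrite cardsU1 cR add1n addnS -addSn.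
by rewrite hF hF'.
Qed.
End G2.


Section Tree.
Variables (V : finType) (root : V) (par : V -> V).
Hypothesis Hr : rooted_tree root par.

Lemma par_root : par root = root. Proof. by case: Hr. Qed.
Lemma iter_root n : iter n par root = root.
Proof. by elim: n => //= n ->; rewrite par_root. Qed.
Lemma anc_iter x y : fconnect par x y -> exists n, y = iter n par x.
Proof. by move/iter_findex => <-; eexists. Qed.
Lemma anc_root x : fconnect par root x -> x = root.
Proof. by case/anc_iter=> n ->; rewrite iter_root. Qed.

Lemma ex_depth v : exists n, iter n par v == root.
Proof. by case: Hr => _ /(_ v) /anc_iter [n ->]; exists n. Qed.
Definition depth v := ex_minn (ex_depth v).
Lemma depthP v : iter (depth v) par v = root /\ forall n, iter n par v = root -> depth v <= n.
Proof.
rewrite /depth; case: ex_minnP => m /eqP h1 h2; split=> // n hn; apply: h2; exact/eqP.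
Qed.
Lemma depth_root : depth root = 0.
Proof. by apply/eqP; rewrite -leqn0; apply: (depthP root).2. Qed.
Lemma depth0 v : depth v = 0 -> v = root.
Proof. by move=> h; have := (depthP v).1; rewrite h. Qed.

Lemma depth_lt v a : fconnect par v a -> a != v -> depth a < depth v.
Proof.
case/anc_iter => i ->; case: i => [|i]; first by rewrite eqxx.
move=> ne; have [h1 _] := depthP v.
case: (ltnP i (depth v)) => hi.
  have : iter (depth v - i.+1) par (iter i.+1 par v) = root by rewrite -iterD subnK.
  move/(depthP _).2 => h; apply: leq_ltn_trans h _; lia.
have -> : iter i.+1 par v = root.
  by rewrite -(subnK (leqW hi)) iterD h1 iter_root.
rewrite depth_root lt0n; apply/eqP => /depth0 vr; move: ne.
by rewrite vr iter_root eqxx.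
Qed.

Lemma depth_le v a : fconnect par v a -> depth a <= depth v.
Proof. by move=> h; case: (eqVneq a v) => [->//|ne]; apply: ltnW; apply: depth_lt. Qed.

Lemma anc_chain v a b : fconnect par v a -> fconnect par v b -> fconnect par a b || fconnect par b a.
Proof.
case/anc_iter=> i ->; case/anc_iter=> j ->.
case: (leqP i j) => h.
  by rewrite -(subnK h) iterD fconnect_iter.
by rewrite -(subnK (ltnW h)) iterD fconnect_iter orbT.
Qed.

Lemma anc_antisym a b : fconnect par a b -> fconnect par b a -> a = b.
Proof.
move=> h1 h2; apply/eqP/negPn/negP => ne.
have := depth_lt h1; rewrite eq_sym ne => /(_ isT) l1.
have := depth_lt h2; rewrite ne => /(_ isT) l2; lia.
Qed.

Lemma anc_par y x : fconnect par y x -> x = y \/ fconnect par (par y) x.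
Proof.
case/anc_iter => [[|n] ->]; first by left.
by right; rewrite iterSr fconnect_iter.
Qed.

Lemma anc_par_mono y x : fconnect par y x -> fconnect par (par y) (par x).
Proof. by case/anc_iter => n ->; rewrite -iterS iterSr fconnect_iter. Qed.

Lemma anc_trans x y z : fconnect par x y -> fconnect par y z -> fconnect par x z.
Proof. exact: connect_trans. Qed.

Lemma anc_rootv v : fconnect par v root. Proof. by case: Hr. Qed.

Section Top.
Variables (E : finType) (ends : E -> V * V).
Hypothesis Hcc : closure_contains ends par.

Definition G := adj ends setT.
Definition top x := [arg min_(y < x | connect G x y) depth y].

Lemma topP x : connect G x (top x) /\ forall y, connect G x y -> depth (top x) <= depth y.
Proof. rewrite /top; case: arg_minnP => //; exact: connect0. Qed.

Lemma G_edge u v : G u v -> fconnect par u v || fconnect par v u.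
Proof.
move=> /existsP [e /andP [_ /jb_ends j]]; have [_ cmp] := Hcc e.
by case/orP: j => /andP [/eqP -> /eqP ->] //; rewrite orbC.
Qed.

Lemma top_anc x y : connect G (top x) y -> fconnect par y (top x).
Proof.
have [Cxt mn] := topP x.
move=> Cty; suff : connect G (top x) y /\ fconnect par y (top x) by case.
move: Cty; apply: (conn_ind (P := fun y => connect G (top x) y /\ fconnect par y (top x))).
  by split; exact: connect0.
move=> u v [Cu Pu] Guv; split; first exact: connect_trans Cu (connect1 Guv).
have Cxv : connect G x v by apply: connect_trans Cxt (connect_trans Cu (connect1 Guv)).
case/orP: (G_edge Guv) => h; last exact: anc_trans h Pu.
case/orP: (anc_chain h Pu) => h2 //.
case: (eqVneq (top x) v) => [->|ne]; first exact: connect0.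
have := depth_lt h2 (introN eqP (fun E => (elimN eqP ne) (esym E))); have := mn _ Cxv; lia.
Qed.

Lemma G_sym : connect_sym G. Proof. exact: adj_csym. Qed.

Lemma top_eq x y : connect G x y -> top x = top y.
Proof.
move=> Cxy; have [Cx _] := topP x; have [Cy _] := topP y.
have Cxy' : connect G (top x) (top y).
  by apply: connect_trans (connect_trans _ Cxy) Cy; rewrite G_sym.
apply: anc_antisym; last exact: top_anc Cxy'.
by apply: top_anc; rewrite G_sym.
Qed.

Lemma top_idem x : top (top x) = top x.
Proof. by rewrite -(top_eq (topP x).1). Qed.

Lemma top_root : top root = root.
Proof.
have [_ mn] := topP root; have := mn root (connect0 _ _).
by rewrite depth_root leqn0 => /eqP /depth0.
Qed.

Lemma top_conn x : connect G x (top x). Proof. exact: (topP x).1. Qed.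

Definition inW v := (v == root) || (top v != v).
Lemma inW_root : inW root. Proof. by rewrite /inW eqxx. Qed.

Fixpoint g n v := if n is n'.+1 then (if inW (par v) then par v else g n' (par v)) else root.

Lemma depth_par v : v != root -> depth (par v) < depth v.
Proof.
move=> nr; apply: depth_lt; first exact: fconnect1.
apply/eqP => pv; have [h _] := depthP v.
have it : forall m, iter m par v = v by elim=> //= m ->.
by move: nr; rewrite -h it eqxx.
Qed.

Lemma gP n v : depth v <= n -> inW (g n v) /\ fconnect par (par v) (g n v) /\
  forall x, inW x -> fconnect par (par v) x -> fconnect par (g n v) x.
Proof.
elim: n v => [|n IH] v hv /=.
  rewrite leqn0 in hv; have vr := depth0 (eqP hv); subst v.
  rewrite par_root //; split; first exact: inW_root.
  split; first exact: connect0.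
  by move=> x _ /anc_root ->; exact: connect0.
case: ifP => hp.
  by split=> //; split=> //; exact: connect0.
have nr : v != root by apply/eqP => vr; move: hp; rewrite vr par_root // inW_root.
have [h1 [h2 h3]] := IH (par v) (ltnSE (leq_trans (depth_par nr) hv)).
split=> //; split; first exact: anc_trans (fconnect1 _ _) h2.
move=> x xW /anc_par [xe|hx]; first by move: hp; rewrite -xe xW.
exact: h3.
Qed.

Local Notation W := {v : V | inW v}.
Definition rootW : W := exist _ root inW_root.
Definition parW (w : W) : W := insubd rootW (g (depth (val w)) (val w)).

Lemma val_parW (w : W) : val (parW w) = g (depth (val w)) (val w).
Proof. by rewrite val_insubd (gP (leqnn _)).1. Qed.

Lemma W_anc (a b : W) : fconnect par (val b) (val a) -> fconnect parW b a.
Proof.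
have [n] := ubnP (depth (val b)); elim: n b => // n IH b hb h.
case: (eqVneq a b) => [->|ne]; first exact: connect0.
have nr : val b != root.
  apply/eqP => br; move: h; rewrite br => /anc_root ar.
  by move: ne; rewrite (val_inj (etrans ar (esym br))) eqxx.
case: (anc_par h) => [E1|hp]; first by move: ne; rewrite (val_inj E1) eqxx.
have [_ [h2 h3]] := gP (leqnn (depth (val b))).
have hc : fconnect par (val (parW b)) (val a) by rewrite val_parW; apply: h3 => //; exact: valP.
apply: connect_trans (fconnect1 _ b) _; apply: IH hc.
rewrite val_parW; apply: leq_ltn_trans (depth_le h2) _.
by apply: leq_trans (depth_par nr) _; rewrite -ltnS.
Qed.

Lemma iterW n (w : W) : fconnect par (iter n par (val w)) (val (iter n parW w)).
Proof.
elim: n => [|n IH]; first exact: connect0.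
rewrite !iterS; apply: anc_trans (anc_par_mono IH) _.
rewrite val_parW; exact: (gP (leqnn _)).2.1.
Qed.

Lemma W_rooted : rooted_tree rootW parW.
Proof.
split; first by apply: val_inj; rewrite val_parW /= depth_root.
by move=> w; apply: W_anc; exact: anc_rootv.
Qed.

Lemma W_depth k : tree_depth_le root par k -> tree_depth_le rootW parW k.
Proof.
move=> Hk w; apply: val_inj; have := iterW k w; rewrite Hk.
by move/anc_root.
Qed.

Definition deep e := if fconnect par (ends e).1 (ends e).2 then (ends e).1 else (ends e).2.

Lemma deep_anc e : fconnect par (deep e) (ends e).1 /\ fconnect par (deep e) (ends e).2.
Proof.
have [_ cmp] := Hcc e; rewrite /deep; case: ifP => h; first by split=> //; exact: connect0.
by rewrite h /= in cmp; split=> //; exact: connect0.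
Qed.

Lemma deep_inW e : inW (deep e).
Proof.
apply/orP; right; apply/eqP => td.
have [ne cmp] := Hcc e.
have Ge : G (ends e).1 (ends e).2.
  by apply: (adj_jb (e := e)); rewrite ?inE // /jb -surjective_pairing eqxx.
have [a1 a2] := deep_anc e.
have Cde : forall x, fconnect par (deep e) x -> connect G (deep e) x -> x = deep e.
  move=> x ax Cx; apply: anc_antisym _ ax.
  by have := top_anc (x:=deep e) (y:=x); rewrite td; apply.
have C12 : connect G (ends e).1 (ends e).2 by exact: connect1.
move: ne Cde a1 a2; rewrite /deep; case: ifP => h ne Cde a1 a2.
  by move: ne; rewrite -(Cde (ends e).2 a2 C12) eqxx.
by move: ne; rewrite -(Cde (ends e).1 a1) ?eqxx // G_sym.
Qed.

Definition fW (e : E) : W := insubd rootW (deep e).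
Lemma val_fW e : val (fW e) = deep e. Proof. by rewrite val_insubd deep_inW. Qed.

Lemma isolated_conn (F : {set E}) v y :
  [forall e in F, (v != (ends e).1) && (v != (ends e).2)] -> connect (adj ends F) v y -> y = v.
Proof.
move=> /forall_inP iso; apply: (conn_ind (P := fun y => y = v)) => // u z -> /existsP [e /andP [eF /jb_ends j]].
have /andP [n1 n2] := iso e eF.
by case/orP: j => /andP [h _]; [move: n1|move: n2]; rewrite h.
Qed.

Lemma acyclic0 : acyclic ends set0.
Proof. by move=> [k [vs [es [_ [_ [h _]]]]]]; move: (h ord0); rewrite inE. Qed.

Lemma rank_le (X : {set E}) : graphic_rank ends X <= tstar_size rootW parW fW X.
Proof.
rewrite /graphic_rank; apply/bigmax_leqP => F /andP [sFX /pboolP ac].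
pose R := [set v | top v == v] :|: [set v | [forall e in F, (v != (ends e).1) && (v != (ends e).2)]].
have pw : pw_disc ends F R.
  move=> r1 r2; rewrite !inE => /orP [t1|i1] /orP [t2|i2] ne; apply/negP => C.
  - have := top_eq (adj_mono (subsetT F) C); rewrite (eqP t1) (eqP t2) => h.
    by rewrite h eqxx in ne.
  - by rewrite (adj_csym ends F) in C; move: ne; rewrite (isolated_conn i2 C) eqxx.
  - by move: ne; rewrite (isolated_conn i1 C) eqxx.
  - by move: ne; rewrite (isolated_conn i1 C) eqxx.
have hb := acyc_bound ac pw.
have : #|F| <= #|~: R| by move: hb; rewrite -(cardsC R); lia.
move/leq_trans; apply.
rewrite /tstar_size -(card_imset _ val_inj); apply: subset_leq_card; apply/subsetP => v.
rewrite !inE negb_or => /andP [tv /forall_inPn [e eF]]; rewrite negb_and !negbK => ve.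
have vW : inW v by rewrite /inW tv orbT.
apply/imsetP; exists (insubd rootW v); last by rewrite val_insubd vW.
rewrite inE; apply/andP; split.
  apply/eqP => /(congr1 val); rewrite val_insubd vW /= => vr.
  by move: tv; rewrite vr top_root eqxx.
apply/existsP; exists e; rewrite (subsetP sFX) //=.
apply: W_anc; rewrite val_insubd vW val_fW.
have [a1 a2] := deep_anc e.
by case/orP: ve => /eqP ->.
Qed.

Lemma rank_T : graphic_rank ends setT = #|{: W}|.-1.
Proof.
apply/eqP; rewrite eqn_leq; apply/andP; split.
  apply: leq_trans (rank_le setT) _; rewrite -(cardC1 rootW); apply: subset_leq_card.
  by apply/subsetP => w; rewrite inE => /andP [].
have [F0 /andP [_ /pboolP ac0] eqF0] : {F0 : {set E} | (F0 \subset setT) && pbool (acyclic ends F0) &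
    \max_(F : {set E} | (F \subset setT) && pbool (acyclic ends F)) #|F| = #|F0| }.
  apply: eq_bigmax_cond; apply/card_gt0P; exists set0; rewrite unfold_in subsetT /=.
  by apply/pboolP; exact: acyclic0.
rewrite /graphic_rank eqF0.
have span : forall e, connect (adj ends F0) (ends e).1 (ends e).2.
  move=> e; apply/negPn/negP => nc.
  have ac1 := add_edge_acyclic ac0 nc.
  have eF : e \notin F0.
    apply/negP => eF; move/negP: nc; apply; apply: connect1; apply: (adj_jb eF).
    by rewrite /jb -surjective_pairing eqxx.
  have h : (e |: F0 \subset setT) && pbool (acyclic ends (e |: F0)) by rewrite subsetT; exact/pboolP.
  have := @leq_bigmax_cond _ (fun F : {set E} => (F \subset setT) && pbool (acyclic ends F)) (fun F : {set E} => #|F|) _ h.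
  by rewrite eqF0 cardsU1 eF add1n ltnn.
have GF : forall x y, connect G x y -> connect (adj ends F0) x y.
  apply: connect_sub => x y /existsP [e /andP [_ /jb_ends j]].
  by case/orP: j => /andP [/eqP -> /eqP ->] //; rewrite adj_csym.
pose R := [set v | top v == v].
have cov : forall x, exists2 r, r \in R & connect (adj ends F0) x r.
  by move=> x; exists (top x); [rewrite inE top_idem | apply: GF; exact: top_conn].
have hb := cover_bound cov.
have cW : #|{: W}| = (#|~: R|).+1.
  rewrite card_sig.
  have EW : [pred x | inW x] =i root |: ~: R.
    by move=> v; rewrite !inE /inW.
  rewrite (eq_card EW).
  by rewrite cardsU1 !inE top_root eqxx.
by rewrite cW /=; move: hb; rewrite -(cardsC R); lia.
Qed.

End Top.
End Tree.


Theorem proposition3p6 (V E : finType) (ends : E -> V * V) (k : nat) :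
  tree_depth_graph_le ends k -> branch_depth_le (graphic_rank ends) k.
Proof.
move=> [root [par [Hr [Hcc Hk]]]].
exists {v : V | inW Hr ends v}, (rootW Hr ends), (@parW V root par Hr E ends), (fW Hr ends); split.
  split; first exact: W_rooted.
  split; first exact: (rank_T Hr Hcc).
  exact: (rank_le Hr Hcc).
exact: W_depth.
Qed.
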